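(* (Bandit setting.) Let $A$ arms have reward distributions supported in $[0,1]$ with mean reward vector $r\in[0,1]^A$, and let $\Delta:=\min_{a\ne a'}|r(a)-r(a')|$. For $\theta\in\mathbb{R}^A$ let $f(\theta)=\langle\pi_\theta,r\rangle$, sample $a\sim\pi_\theta$, observe $R\sim P_a$, form $\hat r(a')=\frac{\mathbb{I}\{a=a'\}}{\pi_\theta(a')}R$ and $\hat g(\theta)(a')=\pi_\theta(a')[\hat r(a')-\langle\pi_\theta,\hat r\rangle]$. Then for all $\theta$, $\mathbb{E}\|\hat g(\theta)\|_2^2\le\varrho\,\|\nabla f(\theta)\|_2$ with $\varrho:=\frac{8A^{3/2}}{\Delta^2}$. (Tabular MDP setting.) For a finite discounted MDP with $S$ states, $A$ actions, rewards in $[0,1]$, discount $\gamma\in[0,1)$, initial distribution $\rho$, and softmax tabular policy $\pi_\theta$, let $f(\theta)=V^{\pi_\theta}(\rho)$. Sample independently $a(s)\sim\pi_\theta(\cdot\mid s)$ for every state $s$, set $\hat Q^{\pi_\theta}(s,a)=\frac{\mathbb{I}\{a(s)=a\}}{\pi_\theta(a\mid s)}Q^{\pi_\theta}(s,a)$ and $\hat g(\theta)(s,a)=\frac{1}{1-\gamma}d^{\pi_\theta}_\rho(s)\,\pi_\theta(a\mid s)\big(\hat Q^{\pi_\theta}(s,a)-\langle\pi_\theta(\cdot\mid s),\hat Q^{\pi_\theta}(s,\cdot)\rangle\big)$. Then for all $\theta$, $\mathbb{E}\|\hat g(\theta)\|_2^2\le\varrho\,\|\nabla f(\theta)\|_2$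 with $\varrho:=\frac{4A^{3/2}S^{1/2}}{(1-\gamma)^4\Delta^2}$, where $\Delta:=\min_s\min_{a\ne a'}|Q^{\pi_\theta}(s,a)-Q^{\pi_\theta}(s,a')|$.
   Context: Softmax policy: $\pi_\theta(a)=\exp(\theta(a))/\sum_{a'}\exp(\theta(a'))$ (bandit) and $\pi_\theta(a\mid s)=\exp(\theta(s,a))/\sum_{a'}\exp(\theta(s,a'))$ (MDP). In the MDP, $Q^\pi(s,a)=\mathbb{E}[\sum_{t\ge0}\gamma^t r(s_t,a_t)\mid s_0=s,a_0=a]$ under $\pi$, $V^\pi(s)=\mathbb{E}_{a\sim\pi(\cdot|s)}Q^\pi(s,a)$, $V^\pi(\rho)=\mathbb{E}_{s\sim\rho}V^\pi(s)$, $A^\pi=Q^\pi-V^\pi$, and $d^\pi_\rho(s)=(1-\gamma)\mathbb{E}_{s_0\sim\rho}\sum_{t\ge0}\gamma^t\Pr^\pi[s_t=s\mid s_0]$. The exact gradients are $\nabla f(\theta)(a)=\pi_\theta(a)[r(a)-\langle\pi_\theta,r\rangle]$ (bandit) and $\nabla f(\theta)(s,a)=\frac{1}{1-\gamma}d^{\pi_\theta}_\rho(s)\pi_\theta(a\mid s)A^{\pi_\theta}(s,a)$ (MDP). Expectations are over the sampled actions (and rewards). *)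

(* Defs.v *)
From HB Require Import structures.
From mathcomp Require Import all_boot all_order all_algebra.
From mathcomp Require Import all_classical all_reals all_analysis.

Set Implicit Arguments.
Unset Strict Implicit.
Unset Printing Implicit Defensive.

Import Order.TTheory GRing.Theory Num.Theory.
Local Open Scope ring_scope.

Section Defs.
Variable R : realType.

Definition softmax (T : finType) (th : T -> R) (a : T) : R :=
  expR (th a) / \sum_(b : T) expR (th b).

Definition inner (T : finType) (u v : T -> R) : R := \sum_(a : T) u a * v a.

Definition sqnorm2 (T : finType) (v : T -> R) : R := \sum_(a : T) v a ^+ 2.
Definition norm2 (T : finType) (v : T -> R) : R := Num.sqrt (sqnorm2 v).

(* minimum of F over {x | P x}; the value 1 is an (irrelevant) default
   used only when this index set is empty *)
Definition fmin (T : finType) (P : pred T) (F : T -> R) : R :=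
  match [pick x | P x] with
  | Some x0 => \big[Num.min/F x0]_(x | P x) F x
  | None => 1
  end.

Section Bandit.
Variable Arm : finType.

Definition bandit_mean (P : Arm -> probability R R) (a : Arm) : R :=
  fine (\int[P a]_x (x%:E))%E.

Definition bandit_Delta (r : Arm -> R) : R :=
  fmin (fun p : Arm * Arm => p.1 != p.2) (fun p => `|r p.1 - r p.2|).

(* exact gradient of f(theta) = <pi_theta, r> *)
Definition bandit_grad (r : Arm -> R) (th : Arm -> R) (a : Arm) : R :=
  softmax th a * (r a - inner (softmax th) r).

(* importance-sampling reward estimate, given sampled arm a and reward x *)
Definition bandit_rhat (th : Arm -> R) (a : Arm) (x : R) (a' : Arm) : R :=
  (a == a')%:R / softmax th a' * x.

Definition bandit_ghat (th : Arm -> R) (a : Arm) (x : R) (a' : Arm) : R :=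
  softmax th a' *
    (bandit_rhat th a x a' - inner (softmax th) (bandit_rhat th a x)).

Definition bandit_Esq (P : Arm -> probability R R) (th : Arm -> R) : \bar R :=
  (\sum_(a : Arm) (softmax th a)%:E *
     \int[P a]_x (sqnorm2 (bandit_ghat th a x))%:E)%E.

End Bandit.

Section MDP.
Variables (S Act : finType).
(* P s a s' = transition probability P(s' | s, a); r s a = reward *)
Variables (P : S -> Act -> S -> R) (r : S -> Act -> R) (gamma : R).

Definition pol (th : S -> Act -> R) (s : S) (a : Act) : R := softmax (th s) a.

(* E^pi[ r(s_t, a_t) | s_0 = s, a_0 = a ] *)
Fixpoint exp_rew (pi : S -> Act -> R) (t : nat) (s : S) (a : Act) : R :=
  match t with
  | 0 => r s a
  | t'.+1 => \sum_(s' : S) P s a s' * \sum_(a' : Act) pi s' a' * exp_rew pi t' s' a'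
  end.

(* Pr^pi[ s_t = s | s_0 ] *)
Fixpoint state_prob (pi : S -> Act -> R) (t : nat) (s0 s : S) : R :=
  match t with
  | 0 => (s0 == s)%:R
  | t'.+1 => \sum_(s1 : S) state_prob pi t' s0 s1 *
               \sum_(a : Act) pi s1 a * P s1 a s
  end.

Definition Qfun (pi : S -> Act -> R) (s : S) (a : Act) : R :=
  limn (fun n => \sum_(t < n) gamma ^+ t * exp_rew pi t s a).

Definition Vfun (pi : S -> Act -> R) (s : S) : R :=
  \sum_(a : Act) pi s a * Qfun pi s a.

Definition Afun (pi : S -> Act -> R) (s : S) (a : Act) : R :=
  Qfun pi s a - Vfun pi s.

Definition dvisit (pi : S -> Act -> R) (rho : S -> R) (s : S) : R :=
  (1 - gamma) * \sum_(s0 : S) rho s0 *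
    limn (fun n => \sum_(t < n) gamma ^+ t * state_prob pi t s0 s).

(* exact gradient of f(theta) = V^{pi_theta}(rho) *)
Definition mdp_grad (rho : S -> R) (th : S -> Act -> R) (p : S * Act) : R :=
  (1 - gamma)^-1 * dvisit (pol th) rho p.1 * pol th p.1 p.2
    * Afun (pol th) p.1 p.2.

(* Qhat(s,a) given the sampled actions sigma(s) ~ pi(.|s) *)
Definition mdp_Qhat (th : S -> Act -> R) (sigma : {ffun S -> Act})
    (s : S) (a : Act) : R :=
  (sigma s == a)%:R / pol th s a * Qfun (pol th) s a.

Definition mdp_ghat (rho : S -> R) (th : S -> Act -> R) (sigma : {ffun S -> Act})
    (p : S * Act) : R :=
  (1 - gamma)^-1 * dvisit (pol th) rho p.1 * pol th p.1 p.2 *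
    (mdp_Qhat th sigma p.1 p.2 - inner (pol th p.1) (mdp_Qhat th sigma p.1)).

(* E || ghat(theta) ||_2^2, with a(s) ~ pi_theta(.|s) independently over s *)
Definition mdp_Esq (rho : S -> R) (th : S -> Act -> R) : R :=
  \sum_(sigma : {ffun S -> Act})
     (\prod_(s : S) pol th s (sigma s)) * sqnorm2 (mdp_ghat rho th sigma).

Definition mdp_Delta (th : S -> Act -> R) : R :=
  fmin (fun p : S * Act * Act => p.1.2 != p.2)
       (fun p => `|Qfun (pol th) p.1.1 p.1.2 - Qfun (pol th) p.1.1 p.2|).

End MDP.
End Defs.

(* Main.v *)
Require Import Defs.
From HB Require Import structures.
From mathcomp Require Import all_boot all_order all_algebra.
From mathcomp Require Import all_classical all_reals all_analysis.
From mathcomp Require Import measurable_realfun ring lra.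
Import Order.TTheory GRing.Theory Num.Theory.
Local Open Scope ring_scope.


Section Integ.
Context {R : realType}.
Local Open Scope classical_set_scope.

Let D : set R := [set x : R | 0 <= x <= 1].
Lemma mD : measurable D.
Proof.
have -> : D = `[0%R, 1%R]%classic.
  by apply/seteqP; split => x /=; rewrite in_itv.
exact: measurable_itv.
Qed.

Lemma nullC (P : probability R R) : P D = 1%E -> P (~` D) = 0%E.
Proof. by move=> h; rewrite probability_setC ?h ?subee //; exact: mD. Qed.

Lemma int_sq_bound (P : probability R R) (h : R) : 0 <= h -> P D = 1%E ->
  (\int[P]_x (x ^+ 2 * h)%:E <= h%:E)%E.
Proof.
move=> h0 PD.
have -> : h%:E = (\int[P]_x (cst h%:E) x)%E.
  rewrite integral_cst //; change (h%:E = (h%:E * P setT)%E); rewrite probability_setT.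
  by rewrite mule1.
apply: (@ae_ge0_le_integral _ _ _ P setT measurableT) => //.
- by move=> x _; rewrite lee_fin mulr_ge0 // sqr_ge0.
- apply/measurable_EFinP; apply: measurable_funM => //.
- exists (~` D); split; first by apply: measurableC; exact: mD.
    exact: nullC.
  move=> x /= hx; apply: contrapT => Dx; apply: hx => _.
  move: Dx => /negP /andP[x0 x1].
  rewrite lee_fin ler_piMl // expr_le1 //.
Qed.

Lemma mean01 (P : probability R R) : P D = 1%E ->
  0 <= fine (\int[P]_x (x%:E))%E <= 1.
Proof.
move=> PD.
pose g := fun x : R => Num.max 0 (Num.min x 1).
have e : (\int[P]_x (x%:E) = \int[P]_x (g x)%:E)%E.
  apply: ae_eq_integral => //. all: try (apply/measurable_EFinP; apply: measurable_maxr => //; exact: measurable_minr).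
  exists (~` D); split; first by apply: measurableC; exact: mD.
      exact: nullC.
    move=> x /= hx; apply: contrapT => Dx; apply: hx => _.
    move: Dx => /negP /andP[x0 x1].
    by rewrite /g (min_l x1) (max_r x0).
have g0 x : 0 <= g x by rewrite /g le_max lexx.
have g1 x : g x <= 1 by rewrite /g ge_max ler01 ge_min lexx orbT.
have mg : measurable_fun setT (fun x => (g x)%:E).
  apply/measurable_EFinP; apply: measurable_maxr => //.
  exact: measurable_minr.
have i0 : (0 <= \int[P]_x (g x)%:E)%E.
  by apply: integral_ge0 => x _; rewrite lee_fin.
have i1 : (\int[P]_x (g x)%:E <= 1)%E.
  have -> : (1 = \int[P]_x (cst 1%:E) x)%E.
    rewrite integral_cst //; change (1%E = (1%:E * P setT)%E); rewrite probability_setT.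
    by rewrite mule1.
  by apply: ge0_le_integral => // x _; rewrite lee_fin.
rewrite e; have := i1; have := i0.
case: (\int[P]_x (g x)%:E)%E => [r| |] //=.
by rewrite !lee_fin => -> ->.
Qed.
End Integ.


Section Real.
Context {R : realType}.

Lemma sum_delta {T : finType} (b : T) (F : T -> R) :
  \sum_(a : T) (b == a)%:R * F a = F b.
Proof.
rewrite (bigD1 b) //= eqxx mul1r big1 ?addr0 // => a /negbTE.
by rewrite eq_sym => ->; rewrite mul0r.
Qed.

Lemma sqnorm_delta (T : finType) (p : T -> R) (b : T) :
  sqnorm2 (fun a => (b == a)%:R - p a) = 1 - 2 * p b + sqnorm2 p.
Proof.
rewrite /sqnorm2.
transitivity (\sum_a ((b == a)%:R * 1 - (b == a)%:R * (2 * p a) + p a ^+ 2)).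
  by apply: eq_bigr => a _; case: (b == a) => /=; rewrite ?mulr1n ?mulr0n; ring.
by rewrite big_split sumrB /= !sum_delta.
Qed.

Lemma core (T : finType) (p Q : T -> R) (D : R) :
  (forall a, 0 <= p a) -> \sum_a p a = 1 -> 0 < D ->
  (forall a b, a != b -> D <= `|Q a - Q b|) ->
  \sum_b p b * sqnorm2 (fun a => (b == a)%:R - p a) <=
  4 / D * \sum_a p a * `|Q a - inner p Q|.
Proof.
move=> p0 p1 D0 sep.
set V := inner p Q.
have [a0 Ha0] : exists a0 : T, forall a, `|Q a0 - V| <= `|Q a - V|.
  case: (pickP T) => [x _|e]; last first.
    by move: p1; rewrite big_pred0 // => /eqP; rewrite eq_sym oner_eq0.
  case: (@arg_minP _ _ T x xpredT (fun a => `|Q a - V|) isT) => a0 _ H.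
  by exists a0 => a; exact: H.
set s2 := sqnorm2 p.
have L : \sum_b p b * sqnorm2 (fun a => (b == a)%:R - p a) = 1 - s2.
  under eq_bigr do rewrite sqnorm_delta.
  rewrite (eq_bigr (fun b => p b - 2 * p b ^+ 2 + s2 * p b)); last first.
    by move=> b _; rewrite /s2; ring.
  rewrite big_split sumrB /= -mulr_sumr -mulr_sumr p1 /s2 /sqnorm2; ring.
have s2a : p a0 ^+ 2 <= s2.
  rewrite /s2 /sqnorm2 (bigD1 a0) //= lerDl sumr_ge0 // => i _.
  exact: sqr_ge0.
have Lb : 1 - s2 <= 2 * (1 - p a0).
  have := sqr_ge0 (p a0 - 1); nra.
have p1' : \sum_(a | a != a0) p a = 1 - p a0.
  by move: p1; rewrite (bigD1 a0) //= => <-; ring.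
have Rb : D / 2 * (1 - p a0) <= \sum_a p a * `|Q a - V|.
  rewrite (bigD1 a0) //= -p1' mulr_sumr.
  apply: (@le_trans _ _ (\sum_(a | a != a0) p a * `|Q a - V|)); last first.
    by rewrite lerDr mulr_ge0.
  apply: ler_sum => a aa0; rewrite mulrC ler_wpM2l //.
  have h1 := sep a a0 aa0.
  have h2 : `|Q a - Q a0| <= `|Q a - V| + `|Q a0 - V|.
    by rewrite (distrC (Q a0)); exact: ler_distD.
  have := Ha0 a; lra.
rewrite L; apply: le_trans Lb _.
have -> : 2 * (1 - p a0) = 4 / D * (D / 2 * (1 - p a0)).
  by field; rewrite gt_eqF.
by rewrite ler_wpM2l // divr_ge0 // ltW.
Qed.


Lemma l1_l2 {T : finType} (v : T -> R) :
  \sum_a `|v a| <= Num.sqrt #|T|%:R * norm2 v.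
Proof.
set N := #|T|%:R.
have H : \sum_i \sum_j (`|v i| - `|v j|) ^+ 2 =
         2 * (N * sqnorm2 v) - 2 * (\sum_a `|v a|) ^+ 2.
  transitivity (\sum_i \sum_j (`|v i| ^+ 2 + `|v j| ^+ 2 - 2 * (`|v i| * `|v j|))).
    by apply: eq_bigr => i _; apply: eq_bigr => j _; ring.
  have nk (x : R) : `|x| ^+ 2 = x ^+ 2 by rewrite real_normK ?num_real.
  set S1 := \sum_a `|v a|.
  have inr i : \sum_j (`|v i| ^+ 2 + `|v j| ^+ 2 - 2 * (`|v i| * `|v j|)) =
      N * `|v i| ^+ 2 + sqnorm2 v - 2 * (`|v i| * S1).
    rewrite sumrB big_split /= sumr_const -mulr_sumr -mulr_sumr /sqnorm2.
    under [X in _ + X - _ = _]eq_bigr do rewrite nk.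
    by rewrite -[_ *+ _]mulr_natl nk.
  under eq_bigr do rewrite inr.
  rewrite sumrB big_split /= sumr_const -!mulr_sumr -[_ *+ _]mulr_natl.
  rewrite -mulr_suml.
  under [X in _ * X + _ - _ = _]eq_bigr do rewrite nk.
  rewrite /S1 /N /sqnorm2 expr2; ring.
have H0 : 0 <= \sum_i \sum_j (`|v i| - `|v j|) ^+ 2.
  by apply: sumr_ge0 => i _; apply: sumr_ge0 => j _; exact: sqr_ge0.
have sq : (\sum_a `|v a|) ^+ 2 <= N * sqnorm2 v by lra.
have s0 : 0 <= \sum_a `|v a| by apply: sumr_ge0.
rewrite /norm2 -sqrtrM ?ler0n //.
rewrite -(ger0_norm s0) -sqrtr_sqr ler_sqrt //.
by rewrite mulr_ge0 ?ler0n // /sqnorm2 sumr_ge0 // => i _; exact: sqr_ge0.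
Qed.

Lemma softmax_gt0 {T : finType} (th : T -> R) a : 0 < softmax th a.
Proof.
rewrite /softmax divr_gt0 ?expR_gt0 //.
rewrite (bigD1 a) //=; have := expR_gt0 (th a).
have : 0 <= \sum_(i | i != a) expR (th i) by apply: sumr_ge0 => i _; exact: expR_ge0.
lra.
Qed.

Lemma softmax_sum1 {T : finType} (th : T -> R) (a0 : T) : \sum_a softmax th a = 1.
Proof.
rewrite /softmax -mulr_suml divff // gt_eqF //.
rewrite (bigD1 a0) //=; have := expR_gt0 (th a0).
have : 0 <= \sum_(i | i != a0) expR (th i) by apply: sumr_ge0 => i _; exact: expR_ge0.
lra.
Qed.

Lemma fmin_le (T : finType) (P : pred T) (F : T -> R) y : P y -> fmin P F <= F y.
Proof.
move=> Py; rewrite /fmin; case: pickP => [x0 Px0|/(_ y)]; last by rewrite Py.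
by apply: ge_bigmin_seq => //; exact: mem_index_enum.
Qed.

Lemma fmin_bound (T : finType) (P : pred T) (F : T -> R) M :
  (forall y, P y -> F y <= M) -> 1 <= M -> fmin P F <= M.
Proof.
move=> HM M1; rewrite /fmin; case: pickP => [x0 Px0|_] //.
apply: le_trans (HM _ Px0).
by apply: ge_bigmin_seq => //; exact: mem_index_enum.
Qed.

End Real.


Section MDPaux.
Context {R : realType}.

Lemma geo_sum (g : R) n : \sum_(t < n) g ^+ t * (1 - g) = 1 - g ^+ n.
Proof.
elim: n => [|n IH]; first by rewrite big_ord0 expr0 subrr.
by rewrite big_ord_recr /= IH exprS; ring.
Qed.

Lemma lim_geo (g : R) (u : nat -> R) : 0 <= g < 1 -> (forall t, 0 <= u t <= 1) ->
  0 <= limn (fun n => \sum_(t < n) g ^+ t * u t) <= (1 - g)^-1.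
Proof.
move=> /andP[g0 g1] u01.
set S := fun n => \sum_(t < n) g ^+ t * u t.
have geo n : \sum_(t < n) g ^+ t <= (1 - g)^-1.
  rewrite -[(1 - g)^-1]div1r ler_pdivlMr ?subr_gt0 // mulr_suml geo_sum.
  have := exprn_ge0 n g0; lra.
have Sle n : S n <= (1 - g)^-1.
  apply: le_trans (geo n); apply: ler_sum => t _.
  have := u01 t => /andP[? ?].
  by rewrite ler_piMr // exprn_ge0.
have S0 n : 0 <= S n.
  apply: sumr_ge0 => t _; have := u01 t => /andP[? ?].
  by rewrite mulr_ge0 // exprn_ge0.
have nd : nondecreasing_seq S.
  apply/nondecreasing_seqP => n; rewrite /S big_ord_recr /= lerDl.
  have := u01 n => /andP[? ?]; by rewrite mulr_ge0 // exprn_ge0.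
have cv : cvgn S.
  apply: nondecreasing_is_cvgn => //; exists (1 - g)^-1 => _ [n _ <-].
  exact: Sle.
apply/andP; split.
  by apply: limr_ge => //; exact: nearW.
by apply: limr_le => //; apply: nearW => n; exact: Sle.
Qed.


Lemma exp_rew01 (S Act : finType) (P : S -> Act -> S -> R) (r : S -> Act -> R)
  (pi : S -> Act -> R) :
  (forall s a s', 0 <= P s a s') -> (forall s a, \sum_(s' : S) P s a s' = 1) ->
  (forall s a, 0 <= r s a <= 1) -> (forall s a, 0 <= pi s a) ->
  (forall s, \sum_a pi s a <= 1) ->
  forall t s a, 0 <= exp_rew P r pi t s a <= 1.
Proof.
move=> P0 P1 r01 pi0 pi1; elim => [|t IH] s a /=; first exact: r01.
apply/andP; split.
  apply: sumr_ge0 => s' _; apply: mulr_ge0 => //.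
  apply: sumr_ge0 => a' _; apply: mulr_ge0 => //.
  by have /andP[] := IH s' a'.
rewrite -(P1 s a); apply: ler_sum => s' _.
rewrite -[X in _ <= X]mulr1; apply: ler_wpM2l => //.
apply: le_trans (pi1 s'); apply: ler_sum => a' _.
by have /andP[? ?] := IH s' a'; rewrite ler_piMr.
Qed.

Lemma state_prob01 (S Act : finType) (P : S -> Act -> S -> R)
  (pi : S -> Act -> R) :
  (forall s a s', 0 <= P s a s') -> (forall s a, \sum_(s' : S) P s a s' = 1) ->
  (forall s a, 0 <= pi s a) ->
  (forall s, \sum_a pi s a <= 1) ->
  forall t s0, (forall s, 0 <= state_prob P pi t s0 s) /\
               \sum_s state_prob P pi t s0 s <= 1.
Proof.
move=> P0 P1 pi0 pi1; elim => [|t IH] s0 /=.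
  split=> [s|]; first by rewrite ler0n.
  rewrite (eq_bigr (fun s => (s0 == s)%:R * 1)); last by move=> *; rewrite mulr1.
  by rewrite sum_delta.
have [IH0 IH1] := IH s0.
split=> [s|].
  apply: sumr_ge0 => s1 _; apply: mulr_ge0 => //.
  by apply: sumr_ge0 => a _; apply: mulr_ge0.
rewrite exchange_big /=.
apply: le_trans IH1; apply: ler_sum => s1 _.
rewrite -mulr_sumr -[X in _ <= X]mulr1; apply: ler_wpM2l => //.
rewrite exchange_big /=; apply: le_trans (pi1 s1); apply: ler_sum => a _.
by rewrite -mulr_sumr P1 mulr1.
Qed.


Lemma expect_ffun (S Act : finType) (p : S -> Act -> R) (s0 : S) (G : Act -> R) :
  (forall s, \sum_b p s b = 1) ->
  \sum_(sg : {ffun S -> Act}) (\prod_s p s (sg s)) * G (sg s0) =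
  \sum_b p s0 b * G b.
Proof.
move=> hp.
pose F := fun s b => if s == s0 then p s b * G b else p s b.
have e1 (sg : {ffun S -> Act}) : (\prod_s p s (sg s)) * G (sg s0) = \prod_s F s (sg s).
  rewrite (bigD1 s0) //= [in RHS](bigD1 s0) //= /F eqxx.
  rewrite [X in _ = _ * X](eq_bigr (fun s => p s (sg s))); last first.
    by move=> s /negbTE ->.
  ring.
rewrite (eq_bigr _ (fun sg _ => e1 sg)) -bigA_distr_bigA /= (bigD1 s0) //=.
rewrite [X in _ * X]big1 ?mulr1 /F ?eqxx //.
by move=> s /negbTE ->; exact: hp.
Qed.

End MDPaux.


Section Bandit.
Variable R : realType.

Lemma ghat_eq (Arm : finType) (th : Arm -> R) a x :
  sqnorm2 (bandit_ghat th a x) =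
  x ^+ 2 * sqnorm2 (fun a' => (a == a')%:R - softmax th a').
Proof.
have pn a' : softmax th a' != 0 by rewrite gt_eqF // softmax_gt0.
have inn : inner (softmax th) (bandit_rhat th a x) = x.
  rewrite /inner /bandit_rhat.
  rewrite (eq_bigr (fun a' => (a == a')%:R * x)); first exact: sum_delta.
  by move=> a' _; field.
have g a' : bandit_ghat th a x a' = x * ((a == a')%:R - softmax th a').
  by rewrite /bandit_ghat inn /bandit_rhat; field.
rewrite /sqnorm2 mulr_sumr; apply: eq_bigr => a' _.
by rewrite g exprMn.
Qed.

Lemma bandit_part (Arm : finType) (P : Arm -> probability R R) :
     (forall a : Arm, P a [set x : R | 0 <= x <= 1]%classic = 1%E) ->
     0 < bandit_Delta (bandit_mean P) ->
     forall th : Arm -> R,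
       (bandit_Esq P th <=
        ((8 * (#|Arm|%:R * Num.sqrt #|Arm|%:R) / bandit_Delta (bandit_mean P) ^+ 2)
          * norm2 (bandit_grad (bandit_mean P) th))%:E)%E.
Proof.
move=> hP hD th.
set r := bandit_mean P.
set Dl := bandit_Delta r.
set pi := softmax th.
set h := fun a => sqnorm2 (fun a' => (a == a')%:R - pi a').
have h0 a : 0 <= h a by rewrite /h /sqnorm2 sumr_ge0 // => i _; exact: sqr_ge0.
have n0 : 0 <= norm2 (bandit_grad r th) by rewrite /norm2 sqrtr_ge0.
case: (pickP Arm) => [a0 _|e]; last first.
  rewrite /bandit_Esq big_pred0 //.
  by rewrite lee_fin mulr_ge0 // divr_ge0 ?sqr_ge0 // mulr_ge0 ?ler0n ?sqrtr_ge0.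
have step1 : (bandit_Esq P th <= (\sum_a pi a * h a)%:E)%E.
  rewrite /bandit_Esq -sumEFin; apply: lee_sum => a _.
  rewrite (EFinM (pi a) (h a)); apply: lee_wpmul2l; first by rewrite lee_fin ltW // softmax_gt0.
  rewrite (@eq_integral _ _ _ (P a) setT (fun x => (x ^+ 2 * h a)%:E)).
    exact: int_sq_bound.
  by move=> x _; rewrite ghat_eq.
apply: le_trans step1 _; rewrite lee_fin.
have r01 a : 0 <= r a <= 1 by exact: mean01.
have sep a b : a != b -> Dl <= `|r a - r b|.
  move=> ab; exact: (@fmin_le _ _ (fun p : Arm * Arm => p.1 != p.2)
                        (fun p => `|r p.1 - r p.2|) (a, b) ab).
have Dl1 : Dl <= 1.
  apply: fmin_bound => // -[a b] _ /=.
  have := r01 a; have := r01 b; move=> /andP[? ?] /andP[? ?].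
  rewrite ler_norml; apply/andP; split; lra.
have c := @core _ Arm pi r Dl (fun a => ltW (softmax_gt0 th a)) (softmax_sum1 th a0) hD sep.
apply: le_trans c _.
have gabs : \sum_a pi a * `|r a - inner pi r| = \sum_a `|bandit_grad r th a|.
  apply: eq_bigr => a _; rewrite /bandit_grad normrM (ger0_norm (ltW (softmax_gt0 th a))).
  by [].
rewrite gabs.
have A1 : 1 <= #|Arm|%:R :> R.
  by rewrite ler1n; apply/card_gt0P; exists a0.
have D0' : 0 <= 4 / Dl by rewrite divr_ge0 // ltW.
have X := ler_wpM2l D0' (l1_l2 (bandit_grad r th)). apply: (le_trans X).
have e : 8 * (#|Arm|%:R * Num.sqrt #|Arm|%:R) / Dl ^+ 2 * norm2 (bandit_grad r th)
   = (4 / Dl * (Num.sqrt #|Arm|%:R * norm2 (bandit_grad r th))) * (2 * #|Arm|%:R / Dl).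
  by field; rewrite gt_eqF.
rewrite e ler_peMr //.
  by apply: mulr_ge0 => //; apply: mulr_ge0; rewrite ?sqrtr_ge0.
rewrite ler_pdivlMr // mul1r; lra.
Qed.
End Bandit.


Lemma mdp_part {R : realType} (S Act : finType) (P : S -> Act -> S -> R) (r : S -> Act -> R)
          (gamma : R) (rho : S -> R) :
     (forall s a s', 0 <= P s a s') ->
     (forall s a, \sum_(s' : S) P s a s' = 1) ->
     (forall s a, 0 <= r s a <= 1) ->
     0 <= gamma < 1 ->
     (forall s, 0 <= rho s) -> \sum_(s : S) rho s = 1 ->
     forall th : S -> Act -> R,
       0 < mdp_Delta P r gamma th ->
       mdp_Esq P r gamma rho th <=
       (4 * (#|Act|%:R * Num.sqrt #|Act|%:R) * Num.sqrt #|S|%:R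
          / ((1 - gamma) ^+ 4 * mdp_Delta P r gamma th ^+ 2))
         * norm2 (mdp_grad P r gamma rho th).
Proof.
move=> P0 P1 r01 hg rho0 rho1 th hD.
have /andP[g0 g1] := hg.
set pi := pol th.
set Q := Qfun P r gamma pi.
set Dl := mdp_Delta P r gamma th.
set M := (1 - gamma)^-1.
set g := mdp_grad P r gamma rho th.
have M0 : 0 < M by rewrite invr_gt0 subr_gt0.
have M1 : 1 <= M by rewrite -[M]div1r ler_pdivlMr ?subr_gt0 // mul1r; lra.
have n0 : 0 <= norm2 g by rewrite /norm2 sqrtr_ge0.
have coef0 : 0 <= 4 * (#|Act|%:R * Num.sqrt #|Act|%:R) * Num.sqrt #|S|%:R
          / ((1 - gamma) ^+ 4 * Dl ^+ 2).
  apply: divr_ge0; last by apply: mulr_ge0; rewrite ?sqr_ge0 // exprn_ge0 // subr_ge0 ltW.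
  by apply: mulr_ge0; rewrite ?sqrtr_ge0 // mulr_ge0 // mulr_ge0 ?ler0n ?sqrtr_ge0.
case: (pickP Act) => [a0 _|e]; last first.
  rewrite /mdp_Esq big1; first by rewrite mulr_ge0.
  move=> sg _; rewrite /sqnorm2 [X in _ * X]big1 ?mulr0 //.
  by move=> -[s a] _; have := e a.
have pi0 s a : 0 <= pi s a by apply: ltW; exact: softmax_gt0.
have pi1 s : \sum_a pi s a = 1 by exact: softmax_sum1.
have pile s : \sum_a pi s a <= 1 by rewrite pi1.
have pin s a : pi s a != 0 by rewrite gt_eqF //; exact: softmax_gt0.
have er := @exp_rew01 _ S Act P r pi P0 P1 r01 pi0 pile.
have Q0M s a : 0 <= Q s a <= M.
  exact: (@lim_geo _ gamma (fun t => exp_rew P r pi t s a) hg (fun t => er t s a)).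
have sp := @state_prob01 _ S Act P pi P0 P1 pi0 pile.
have sp01 t s0 s : 0 <= state_prob P pi t s0 s <= 1.
  have [h0 h1] := sp t s0; rewrite h0 /=; apply: le_trans h1.
  rewrite (bigD1 s) //= lerDl sumr_ge0 //.
have L01 s0 s : 0 <= limn (fun n => \sum_(t < n) gamma ^+ t * state_prob P pi t s0 s) <= M.
  exact: (@lim_geo _ gamma (fun t => state_prob P pi t s0 s) hg (fun t => sp01 t s0 s)).
set c := fun s => M * dvisit P gamma pi rho s.
have c0M s : 0 <= c s <= M.
  rewrite /c /dvisit -/M.
  have S0 : 0 <= \sum_s0 rho s0 *
      limn (fun n => \sum_(t < n) gamma ^+ t * state_prob P pi t s0 s).
    by apply: sumr_ge0 => s0 _; apply: mulr_ge0 => //; have /andP[? ?] := L01 s0 s.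
  have S1 : \sum_s0 rho s0 *
      limn (fun n => \sum_(t < n) gamma ^+ t * state_prob P pi t s0 s) <= M.
    rewrite -[X in _ <= X]mul1r -rho1 mulr_suml; apply: ler_sum => s0 _.
    by apply: ler_wpM2l => //; have /andP[? ?] := L01 s0 s.
  have e1 : M * (1 - gamma) = 1 by rewrite /M mulVf // gt_eqF // subr_gt0.
  apply/andP; split.
    by rewrite mulr_ge0 ?(ltW M0) // mulr_ge0 // subr_ge0 ltW.
  rewrite mulrA e1 mul1r //.
have sep s a b : a != b -> Dl <= `|Q s a - Q s b|.
  move=> ab.
  exact: (@fmin_le _ _ (fun p : S * Act * Act => p.1.2 != p.2)
           (fun p => `|Q p.1.1 p.1.2 - Q p.1.1 p.2|) ((s, a), b) ab).
have DlM : Dl <= M.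
  apply: fmin_bound => // -[[s a] b] _ /=.
  have := Q0M s a; have := Q0M s b; move=> /andP[? ?] /andP[? ?].
  change (`|Q s a - Q s b| <= M).
  rewrite ler_norml; apply/andP; split; lra.
set h := fun s b => sqnorm2 (fun a => (b == a)%:R - pi s a).
have h0 s b : 0 <= h s b by rewrite /h /sqnorm2 sumr_ge0 // => i _; exact: sqr_ge0.
have ghat_eq (sg : {ffun S -> Act}) s a :
    mdp_ghat P r gamma rho th sg (s, a) = c s * Q s (sg s) * ((sg s == a)%:R - pi s a).
  have inn : inner (pi s) (mdp_Qhat P r gamma th sg s) = Q s (sg s).
    rewrite /inner /mdp_Qhat (eq_bigr (fun a => (sg s == a)%:R * Q s a)).
      exact: sum_delta.
    by move=> a' _; rewrite -/pi -/Q; field.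
  rewrite /mdp_ghat /= -/pi inn /mdp_Qhat -/pi -/Q /c.
  rewrite /M; case: eqP => [<-|_] /=; rewrite ?mulr1n ?mulr0n; field; by rewrite pin gt_eqF // subr_gt0.
have sq (sg : {ffun S -> Act}) : sqnorm2 (mdp_ghat P r gamma rho th sg) =
    \sum_s (c s ^+ 2 * Q s (sg s) ^+ 2 * h s (sg s)).
  rewrite /sqnorm2 (eq_bigr (fun p => mdp_ghat P r gamma rho th sg (p.1, p.2) ^+ 2));
    last by move=> -[].
  rewrite -(pair_big xpredT xpredT (fun s a => mdp_ghat P r gamma rho th sg (s, a) ^+ 2)) /=.
  apply: eq_bigr => s _; rewrite /h /sqnorm2 mulr_sumr; apply: eq_bigr => a _.
  by rewrite ghat_eq !exprMn.
have E : mdp_Esq P r gamma rho th =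
    \sum_s \sum_b pi s b * (c s ^+ 2 * Q s b ^+ 2 * h s b).
  rewrite /mdp_Esq -/pi.
  under eq_bigr do rewrite sq mulr_sumr.
  rewrite exchange_big /=; apply: eq_bigr => s _.
  exact: (@expect_ffun _ S Act pi s (fun b => c s ^+ 2 * Q s b ^+ 2 * h s b) pi1).
set Y := fun s => \sum_a pi s a * `|Q s a - inner (pi s) (Q s)|.
have Y0 s : 0 <= Y s by apply: sumr_ge0 => a _; rewrite mulr_ge0.
have D4 : 0 <= 4 / Dl by rewrite divr_ge0 // ltW.
have per s : \sum_b pi s b * (c s ^+ 2 * Q s b ^+ 2 * h s b) <=
             c s * (M ^+ 3 * (4 / Dl)) * Y s.
  have /andP[c0 cM] := c0M s.
  apply: (@le_trans _ _ (\sum_b (c s ^+ 2 * M ^+ 2) * (pi s b * h s b))).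
    apply: ler_sum => b _.
    rewrite (_ : pi s b * _ = (c s ^+ 2 * (pi s b * h s b)) * Q s b ^+ 2); last by ring.
    rewrite (_ : (c s ^+ 2 * M ^+ 2) * (pi s b * h s b) = (c s ^+ 2 * (pi s b * h s b)) * M ^+ 2); last by ring.
    apply: ler_wpM2l; first by rewrite mulr_ge0 ?sqr_ge0 // mulr_ge0.
    have /andP[q0 qM] := Q0M s b.
    nra.
  rewrite -mulr_sumr.
  have co := @core _ Act (pi s) (Q s) Dl (pi0 s) (pi1 s) hD (sep s).
  have cm0 : 0 <= c s ^+ 2 * M ^+ 2 by rewrite mulr_ge0 ?sqr_ge0.
  apply: le_trans (ler_wpM2l cm0 co) _.
  rewrite -/(Y s).
  rewrite (_ : _ * (4 / Dl * Y s) = (c s * M ^+ 2 * (4 / Dl) * Y s) * c s); last by ring.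
  rewrite (_ : c s * _ * Y s = (c s * M ^+ 2 * (4 / Dl) * Y s) * M); last by ring.
  apply: ler_wpM2l => //.
  by rewrite mulr_ge0 // mulr_ge0 // mulr_ge0 // sqr_ge0.
have gabs : \sum_s c s * Y s = \sum_p `|g p|.
  rewrite -(pair_big xpredT xpredT (fun s a => `|g (s, a)|)) /=.
  apply: eq_bigr => s _; rewrite /Y mulr_sumr; apply: eq_bigr => a _.
  have /andP[c0 _] := c0M s.
  have -> : g (s, a) = (c s * pi s a) * (Q s a - inner (pi s) (Q s)) by [].
  by rewrite normrM (ger0_norm (mulr_ge0 c0 (pi0 s a))) mulrA.
rewrite E.
apply: (@le_trans _ _ (\sum_s c s * (M ^+ 3 * (4 / Dl)) * Y s)).
  by apply: ler_sum => s _; exact: per.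
have -> : \sum_s c s * (M ^+ 3 * (4 / Dl)) * Y s = (M ^+ 3 * (4 / Dl)) * \sum_s c s * Y s.
  by rewrite mulr_sumr; apply: eq_bigr => s _; ring.
rewrite gabs.
have K0 : 0 <= M ^+ 3 * (4 / Dl) by rewrite mulr_ge0 // exprn_ge0 // ltW.
apply: le_trans (ler_wpM2l K0 (l1_l2 g)) _.
rewrite card_prod natrM sqrtrM ?ler0n //.
have A1 : 1 <= #|Act|%:R :> R by rewrite ler1n; apply/card_gt0P; exists a0.
have e : 4 * (#|Act|%:R * Num.sqrt #|Act|%:R) * Num.sqrt #|S|%:R /
    ((1 - gamma) ^+ 4 * Dl ^+ 2) * norm2 g
  = (M ^+ 3 * (4 / Dl) * (Num.sqrt #|S|%:R * Num.sqrt #|Act|%:R * norm2 g)) *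
    (#|Act|%:R * M / Dl).
  by rewrite /M; field; rewrite !gt_eqF // subr_gt0.
rewrite e ler_peMr //.
  apply: mulr_ge0 => //; apply: mulr_ge0 => //; apply: mulr_ge0; exact: sqrtr_ge0.
rewrite ler_pdivlMr // mul1r.
have : M <= #|Act|%:R * M by rewrite ler_peMl // ltW.
lra.
Qed.

Theorem theorem4 (R : realType) :
  (* bandit setting *)
  (forall (Arm : finType) (P : Arm -> probability R R),
     (forall a : Arm, P a [set x : R | 0 <= x <= 1]%classic = 1%E) ->
     0 < bandit_Delta (bandit_mean P) ->
     forall th : Arm -> R,
       (bandit_Esq P th <=
        ((8 * (#|Arm|%:R * Num.sqrt #|Arm|%:R) / bandit_Delta (bandit_mean P) ^+ 2)
          * norm2 (bandit_grad (bandit_mean P) th))%:E)%E)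
  /\
  (* tabular MDP setting *)
  (forall (S Act : finType) (P : S -> Act -> S -> R) (r : S -> Act -> R)
          (gamma : R) (rho : S -> R),
     (forall s a s', 0 <= P s a s') ->
     (forall s a, \sum_(s' : S) P s a s' = 1) ->
     (forall s a, 0 <= r s a <= 1) ->
     0 <= gamma < 1 ->
     (forall s, 0 <= rho s) -> \sum_(s : S) rho s = 1 ->
     forall th : S -> Act -> R,
       0 < mdp_Delta P r gamma th ->
       mdp_Esq P r gamma rho th <=
       (4 * (#|Act|%:R * Num.sqrt #|Act|%:R) * Num.sqrt #|S|%:R
          / ((1 - gamma) ^+ 4 * mdp_Delta P r gamma th ^+ 2))
         * norm2 (mdp_grad P r gamma rho th)).
Proof.
split.
- exact: bandit_part.
- exact: mdp_part.
Qed.
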